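(* Let $T\in M_n(\mathbb C)$ be a nilpotent matrix such that $\|T\|=\|T^{n-1}\|=1$. Then $T$ is unitarily similar to $S$, i.e. there is a unitary $U$ with $T=USU^*$.
   Context: $S$ denotes the $n\times n$ nilpotent Jordan block with ones on the superdiagonal and zeros elsewhere. $\|\cdot\|$ is the operator norm on $M_n(\mathbb C)$ induced by the Euclidean norm on $\mathbb C^n$. *)

(* Defs.v *)
(* Complex scalars: an arbitrary numClosedFieldType C
   (algebraically closed field with conjugation and order, e.g. algC). *)
From HB Require Import structures.
From mathcomp Require Import all_boot all_order all_algebra.
Set Implicit Arguments. Unset Strict Implicit. Unset Printing Implicit Defensive.
Import Order.TTheory GRing.Theory Num.Theory.
Local Open Scope ring_scope.

Definition vnorm (C : numClosedFieldType) (n : nat) (x : 'cV[C]_n) : C :=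
  sqrtC (\sum_(i < n) `|x i 0| ^+ 2).

Definition is_opnorm (C : numClosedFieldType) (n : nat) (A : 'M[C]_n) (c : C) : Prop :=
  (forall x : 'cV[C]_n, vnorm x = 1 -> vnorm (A *m x) <= c) /\
  (forall d : C, (forall x : 'cV[C]_n, vnorm x = 1 -> vnorm (A *m x) <= d) -> c <= d).

Definition adjmx (C : numClosedFieldType) (n : nat) (A : 'M[C]_n) : 'M[C]_n :=
  (map_mx Num.conj A)^T.

Definition unitary (C : numClosedFieldType) (n : nat) (U : 'M[C]_n) : Prop :=
  U *m adjmx U = 1%:M /\ adjmx U *m U = 1%:M.

Definition shiftmx (C : numClosedFieldType) (n : nat) : 'M[C]_n :=
  \matrix_(i < n, j < n) (((i : nat).+1 == (j : nat))%N)%:R.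

Definition nilpotent (C : numClosedFieldType) (n : nat) (A : 'M[C]_n) : Prop :=
  exists k : nat, A ^+ k = 0.

(* Main.v *)
Require Import Defs.
From HB Require Import structures.
From mathcomp Require Import all_boot all_order all_algebra.
From mathcomp Require Import zify ring.
Set Implicit Arguments. Unset Strict Implicit. Unset Printing Implicit Defensive.
Import Order.TTheory GRing.Theory Num.Theory.
Local Open Scope ring_scope.
Local Open Scope sesquilinear_scope.

Section Rank.
Variable F : fieldType.

Lemma rkS m (M : 'M[F]_m) k : (\rank (M ^+ k.+1) <= \rank (M ^+ k))%N.
Proof. by rewrite exprS -mulmxE mxrankM_maxr. Qed.

Lemma rk_stab m (M : 'M[F]_m) k :
  \rank (M ^+ k.+1) = \rank (M ^+ k) -> \rank (M ^+ k.+2) = \rank (M ^+ k.+1).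
Proof.
move=> E.
have sAB : (M ^+ k.+1 <= M ^+ k)%MS by rewrite exprS -mulmxE submxMl.
have /eqmxP S : (M ^+ k.+1 == M ^+ k)%MS.
  by rewrite -(mxrank_leqif_eq sAB).2 E.
by rewrite [in LHS]exprSr [in RHS]exprSr -!mulmxE (eqmxMr _ S).
Qed.

Lemma rk_stab_all m (M : 'M[F]_m) k :
  \rank (M ^+ k.+1) = \rank (M ^+ k) -> forall j, \rank (M ^+ (k + j)) = \rank (M ^+ k).
Proof.
move=> E j; elim: j => [|j IH]; first by rewrite addn0.
have E' : \rank (M ^+ (k + j).+1) = \rank (M ^+ (k + j)).
  elim: j {IH} => [|j IHj]; first by rewrite addn0.
  by rewrite addnS rk_stab.
by rewrite addnS E' IH.
Qed.

Lemma rk_strict m (M : 'M[F]_m) k k0 : M ^+ k0 = 0 -> M ^+ k != 0 ->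
  (\rank (M ^+ k.+1) < \rank (M ^+ k))%N.
Proof.
move=> Z NZ; rewrite ltn_neqAle rkS andbT; apply/eqP => E.
have := rk_stab_all E k0; rewrite exprD Z mulr0 mxrank0 => /esym/eqP.
by rewrite mxrank_eq0 (negPf NZ).
Qed.

Lemma nil_rank m (M : 'M[F]_m.+1) k0 : M ^+ k0 = 0 -> M ^+ m != 0 ->
  \rank (M ^+ m) = 1%N /\ M ^+ m.+1 = 0.
Proof.
move=> Z NZ.
have NZk : forall k, (k <= m)%N -> M ^+ k != 0.
  move=> k km; apply: contraNneq NZ => E.
  have -> : M ^+ m = M ^+ k * M ^+ (m - k) by rewrite -exprD subnKC.
  by rewrite E mul0r.
have B : forall k, (k <= m.+1)%N -> (\rank (M ^+ k) + k <= m.+1)%N.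
  elim=> [|k IH] km; first by rewrite expr0 mxrank1 addn0.
  have := rk_strict Z (NZk k km); have := IH (ltnW km).
  by rewrite addnS; move=> h1 h2; apply: leq_trans h1; rewrite ltn_add2r.
split.
  apply/eqP; rewrite eqn_leq lt0n mxrank_eq0 NZ andbT.
  by have := B m (leqnSn m); lia.
apply/eqP; rewrite -mxrank_eq0; have := B m.+1 (leqnn _).
move=> h; apply/eqP; lia.
Qed.
End Rank.

Section Dot.
Variable C : numClosedFieldType.
Local Notation dt := (@dotmx C _).
Local Notation nq u := (@dotmx C _ u u).

Lemma trmxX m (A : 'M[C]_m) k : (A ^+ k)^T = (A^T) ^+ k.
Proof.
elim: k => [|k IH]; first by rewrite !expr0 trmx1.
by rewrite exprS exprSr -!mulmxE trmx_mul IH.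
Qed.

Lemma dt_adj n (u w : 'rV[C]_n) (A : 'M[C]_n) : dt (u *m A) w = dt u (w *m A^t*).
Proof.
rewrite !dotmxE; congr (_ _ _).
by rewrite trmx_mul map_mxM trmxCK mulmxA.
Qed.

Lemma nq_ge0 n (u : 'rV[C]_n) : 0 <= nq u.
Proof. exact: dnorm_ge0. Qed.

Lemma nq_real n (u : 'rV[C]_n) : (nq u)^* = nq u.
Proof. by apply/CrealP; rewrite realE nq_ge0. Qed.

Lemma nq_eq0 n (u : 'rV[C]_n) : (nq u == 0) = (u == 0).
Proof. exact: dnorm_eq0. Qed.

Lemma nqZ n a (u : 'rV[C]_n) : nq (a *: u) = `|a| ^+ 2 * nq u.
Proof. exact: dnormZ. Qed.

Lemma nq_unit n (u : 'rV[C]_n) : u != 0 -> nq ((sqrtC (nq u))^-1 *: u) = 1.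
Proof.
move=> nz; rewrite nqZ normfV ger0_norm; last by rewrite sqrtC_ge0 nq_ge0.
by rewrite exprVn sqrtCK mulVf // nq_eq0.
Qed.

Lemma sqrtC_le1 (a : C) : 0 <= a -> (sqrtC a <= 1) = (a <= 1).
Proof. by move=> a0; rewrite -{1}sqrtC1 ler_sqrtC // nnegrE. Qed.

Lemma sqrtC_eq1 (a : C) : sqrtC a = 1 -> a = 1.
Proof. by move=> h; rewrite -(sqrtCK a) h expr1n. Qed.

End Dot.

Section Eq.
Variable C : numClosedFieldType.
Local Notation dt := (@dotmx C _).
Local Notation nq u := (@dotmx C _ u u).

Lemma dt_herm n (u w : 'rV[C]_n) : dt u w = (dt w u)^*.
Proof. by rewrite hermC /= expr0 mul1r. Qed.

Lemma dt_adj' n (u w : 'rV[C]_n) (A : 'M[C]_n) : dt u (w *m A) = dt (u *m A^t*) w.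
Proof. by rewrite dt_adj trmxCK. Qed.

Lemma keyD n (M : 'M[C]_n) (u w : 'rV[C]_n) :
  dt (u *m (1%:M - M *m M^t*)) w = dt u w - dt (u *m M) (w *m M).
Proof.
by rewrite mulmxBr mulmx1 linearBl /= mulmxA dt_adj' .
Qed.

Lemma eq_contr n (M : 'M[C]_n) (y : 'rV[C]_n) :
  (forall u, nq (u *m M) <= nq u) -> nq (y *m M) = nq y ->
  y *m (M *m M^t*) = y.
Proof.
move=> contr eqy.
set E := 1%:M - M *m M^t*.
have Dpos : forall z, 0 <= dt (z *m E) z.
  by move=> z; rewrite keyD subr_ge0.
have Dyy : dt (y *m E) y = 0 by rewrite keyD eqy subrr.
have Dgy0 : dt (y *m E) (y *m E) = (dt ((y *m E) *m E) y)^*.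
  by rewrite [in RHS]keyD rmorphB /= -!dt_herm keyD.
set g := y *m E in Dyy Dgy0 *.
have gE : g = y - y *m (M *m M^t*) by rewrite /g /E mulmxBr mulmx1.
have gdef : y *m E = g by [].
clearbody g.
set a := nq g.
have ar : a^* = a by rewrite nq_real.
have Dgy : dt (g *m E) y = a by rewrite -[LHS]conjCK -Dgy0 ar.
set q := nq g - nq (g *m M).
have Dgg : dt (g *m E) g = q by rewrite keyD.
have qr : q^* = q by rewrite /q rmorphB /= !nq_real.
have q0 : 0 <= q by rewrite /q subr_ge0 contr.
set c := q + 1.
have cr : c^* = c by rewrite /c rmorphD /= qr rmorph1.
clearbody E.
have := Dpos (c *: y - a *: g).
rewrite mulmxBl -!scalemxAl.
rewrite !linearBl /= !linearZl_LR /= !linearBr /= !linearZr_LR /=.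
rewrite gdef Dyy Dgy Dgg -/a ar cr.
have -> : c * (c * 0 - a * a) - a * (c * a - a * q) = - (a ^+ 2 * (q + 2%:R)).
  by rewrite /c; ring.
rewrite oppr_ge0 => h.
have a0 : 0 <= a by rewrite /a nq_ge0.
have : a ^+ 2 * (q + 2%:R) == 0.
  rewrite eq_le h /=; apply: mulr_ge0; first exact: exprn_ge0.
  by apply: addr_ge0 => //; rewrite ler0n.
rewrite mulf_eq0 expf_eq0 /= => /orP [/eqP|]; last first.
  by rewrite gt_eqF // ltr_wpDl // ltr0n.
rewrite /a => /eqP; rewrite nq_eq0 gE subr_eq0 => /eqP <-. by [].
Qed.
End Eq.

Section Main.
Variable C : numClosedFieldType.
Local Notation dt := (@dotmx C _).
Local Notation nq u := (@dotmx C _ u u).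

Lemma mxXS n (A : 'M[C]_n) k : A ^+ k *m A = A ^+ k.+1.
Proof. by rewrite exprSr -mulmxE. Qed.

Lemma vnormE n (x : 'cV[C]_n) : vnorm x = sqrtC (nq x^T).
Proof.
rewrite /vnorm dotmxE mxE; congr sqrtC; apply: eq_bigr => i _.
by rewrite !mxE normCK.
Qed.

Lemma vnorm0 n : vnorm (0 : 'cV[C]_n) = 0.
Proof. by rewrite /vnorm big1 ?sqrtC0 // => i _; rewrite mxE normr0 expr0n. Qed.

Lemma opnorm_ne0 n (A : 'M[C]_n) : is_opnorm A 1 -> A != 0.
Proof.
move=> [_ h]; apply/eqP => A0.
have : (1 : C) <= 0 by apply: h => x _; rewrite A0 mul0mx vnorm0.
by rewrite ler10.
Qed.

Lemma opnorm_contr n (A : 'M[C]_n) :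
  (forall x, vnorm x = 1 -> vnorm (A *m x) <= 1) ->
  forall u : 'rV[C]_n, nq (u *m A^T) <= nq u.
Proof.
move=> h u; have [->|nz] := eqVneq u 0.
  by rewrite mul0mx linear0l.
set s := sqrtC (nq u).
have := h (s^-1 *: u)^T.
rewrite !vnormE trmxK nq_unit // sqrtC1 => /(_ erefl).
rewrite trmx_mul trmxK -scalemxAl nqZ sqrtC_le1; last first.
  by rewrite mulr_ge0 ?exprn_ge0 ?nq_ge0.
have upos : 0 < nq u by rewrite lt_def nq_eq0 nz nq_ge0.
rewrite normfV ger0_norm ?sqrtC_ge0 ?nq_ge0 // exprVn sqrtCK mulrC.
by rewrite ler_pdivrMr // mul1r.
Qed.

End Main.

Theorem lemma2p1 (C : numClosedFieldType) (n : nat) (T : 'M[C]_n) :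
  nilpotent T -> is_opnorm T 1 -> is_opnorm (T ^+ n.-1) 1 ->
  exists U : 'M[C]_n, unitary U /\ T = U *m shiftmx C n *m adjmx U.
Proof.
move=> [k0 Tk0] hT hA.
have Anz := opnorm_ne0 hA.
case: n T Tk0 hT hA Anz => [|m] T Tk0 hT hA Anz.
  by exfalso; move: Anz; rewrite (_ : T ^+ _ = 0) ?eqxx //; apply/matrixP => [[]].
rewrite /= in hA Anz.
set M := T^T.
have contr : forall u : 'rV[C]_m.+1, dotmx (u *m M) (u *m M) <= dotmx u u.
  exact: opnorm_contr hT.1.
have Mk0 : M ^+ k0 = 0 by rewrite /M -trmxX Tk0 trmx0.
have Mmnz : M ^+ m != 0 by rewrite /M -trmxX trmx_eq0.
have [rk1 Mm1] := nil_rank Mk0 Mmnz.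
have [w [r wr]] : exists (w : 'cV[C]_m.+1) (r : 'rV[C]_m.+1), w *m r = M ^+ m.
  move: (col_base (M ^+ m)) (row_base (M ^+ m)) (mulmx_base (M ^+ m)).
  rewrite rk1 => cb rb e; by exists cb, rb.
set v : 'rV[C]_m.+1 := w^t*.
have uMm : forall u, u *m M ^+ m = dotmx u v *: r.
  move=> u; rewrite -wr mulmxA [u *m w]mx11_scalar mul_scalar_mx.
  by rewrite dotmxE /v trmxCK.
have nquMm : forall u, dotmx (u *m M ^+ m) (u *m M ^+ m) = `|dotmx u v| ^+ 2 * dotmx r r.
  by move=> u; rewrite uMm nqZ.
have vnz : v != 0.
  apply: contraNneq Mmnz => v0; rewrite -wr -(trmxCK w) -/v v0.
  by rewrite trmx0 map_mx0 mul0mx.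
set K := dotmx v v * dotmx r r.
have bnd : forall u, dotmx u u = 1 -> dotmx (u *m M ^+ m) (u *m M ^+ m) <= K.
  move=> u u1; rewrite nquMm /K; apply: ler_wpM2r; first exact: nq_ge0.
  rewrite -[dotmx v v]mul1r -u1; exact: (CauchySchwarz (@dotmx C m.+1) u v).1.
have K0 : 0 <= K by rewrite /K mulr_ge0 ?nq_ge0.
have K1 : 1 <= K.
  have : (1 : C) <= sqrtC K.
    apply: hA.2 => x x1; rewrite !vnormE trmx_mul trmxX -/M.
    rewrite vnormE in x1; have := sqrtC_eq1 x1 => {}x1.
    by rewrite ler_sqrtC ?nnegrE ?nq_ge0 ?bnd.
  by rewrite -{1}sqrtC1 ler_sqrtC ?nnegrE ?ler01.
set x0 := (sqrtC (dotmx v v))^-1 *: v.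
have x01 : dotmx x0 x0 = 1 by rewrite nq_unit.
have x0Mm : dotmx (x0 *m M ^+ m) (x0 *m M ^+ m) = K.
  rewrite nquMm /K /x0 linearZl_LR /= normrM normfV.
  rewrite !ger0_norm ?sqrtC_ge0 ?nq_ge0 // exprMn exprVn sqrtCK.
  by rewrite mulrA mulVf ?mul1r // nq_eq0.
pose f k := dotmx (x0 *m M ^+ k) (x0 *m M ^+ k).
have fS : forall k, f k.+1 <= f k by move=> k; rewrite /f exprSr -mulmxE mulmxA contr.
have fmono : forall k j, f (k + j)%N <= f k.
  move=> k; elim=> [|j IH]; first by rewrite addn0.
  by rewrite addnS (le_trans (fS _)).
have f1 : forall k, (k <= m)%N -> f k = 1.
  move=> k km; apply/eqP; rewrite eq_le; apply/andP; split.
    by have := fmono 0%N k; rewrite add0n /f expr0 mulmx1 x01.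
  apply: (le_trans K1); rewrite -x0Mm -/(f m) -(subnKC km); exact: fmono.
have fixk : forall k, (k < m)%N -> x0 *m M ^+ k *m (M *m M^t*) = x0 *m M ^+ k.
  move=> k km; apply: eq_contr => //.
  have -> : x0 *m M ^+ k *m M = x0 *m M ^+ k.+1 by rewrite exprSr -mulmxE mulmxA.
  by rewrite -/(f k.+1) -/(f k) !f1 // ltnW.
have shift : forall i j, (i < m)%N ->
    dotmx (x0 *m M ^+ i) (x0 *m M ^+ j) = dotmx (x0 *m M ^+ i.+1) (x0 *m M ^+ j.+1).
  move=> i j im; rewrite -{1}(fixk i im) !exprSr -!mulmxE !mulmxA.
  by rewrite (dt_adj' (x0 *m M ^+ i *m M) (x0 *m M ^+ j) M) -mulmxA.
have orth0 : forall d i j, (i < j)%N -> (j + d)%N = m.+1 ->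
    dotmx (x0 *m M ^+ i) (x0 *m M ^+ j) = 0.
  elim=> [|d IH] i j ij e.
    by move: e; rewrite addn0 => ->; rewrite Mm1 mulmx0 linear0r.
  rewrite shift; last by lia.
  apply: IH; lia.
have ortho : forall i j, (i <= m)%N -> (j <= m)%N ->
    dotmx (x0 *m M ^+ i) (x0 *m M ^+ j) = (i == j)%:R.
  move=> i j im jm; case: (ltngtP i j) => [ij|ji|<-].
  - by rewrite (orth0 (m.+1 - j)%N) //; lia.
  - by rewrite dt_herm (orth0 (m.+1 - i)%N) ?conjC0 //; lia.
  - exact: f1.
pose W : 'M[C]_m.+1 := \matrix_(i < m.+1) (x0 *m M ^+ (m - i)).
have Wu : W \is unitarymx.
  apply/row_unitarymxP => i j; rewrite !rowK ortho ?leq_subr //.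
  have Hi := ltn_ord i; have Hj := ltn_ord j.
  case: (eqVneq i j) => [->|ne]; first by rewrite !eqxx.
  have /negPf -> // : (m - i)%N != (m - j)%N.
  by apply: contra_neq ne => h; apply/val_inj => /=; lia.
have WM : W *m M = (shiftmx C m.+1)^T *m W.
  apply/row_matrixP => i; rewrite !row_mul rowK [in RHS]mulmx_sum_row.
  case: i => [[|i] Hi].
    rewrite big1 => [|k _]; last by rewrite !mxE /= scale0r.
    by rewrite subn0 -mulmxA mxXS Mm1 mulmx0.
  have Hi' : (i < m.+1)%N by lia.
  rewrite (bigD1 (Ordinal Hi')) //= big1 => [|k kne]; last first.
    rewrite !mxE /=; case: eqP => [e|]; last by rewrite scale0r.
    move: kne; rewrite (_ : k = Ordinal Hi') ?eqxx //; apply/val_inj => /=; lia.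
  rewrite !mxE eqxx scale1r addr0 rowK /= -mulmxA mxXS.
  by congr (_ *m M ^+ _); lia.
have WW : W^t* *m W = 1%:M by apply: mulmx1C; apply/unitarymxP.
have WW' : W *m W^t* = 1%:M by apply/unitarymxP.
exists W^T; split; first split.
- by rewrite /adjmx -trmx_mul WW trmx1.
- by rewrite /adjmx -trmx_mul WW' trmx1.
have TU : T *m W^T = W^T *m shiftmx C m.+1.
  by rewrite -[T]trmxK -/M -[shiftmx C m.+1]trmxK -!trmx_mul WM.
by rewrite -TU -mulmxA /adjmx -trmx_mul WW trmx1 mulmx1.
Qed.
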